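(* Let $\mathsf A_1,\dots,\mathsf A_n$ be quantum observables on a finite-dimensional Hilbert space with finite outcome sets, and for each $j$ let $\widetilde{\mathsf A}_j(x')=\sum_x\nu_j(x',x)\mathsf A_j(x)$ for some stochastic matrix $\nu_j$ (a post-processing of $\mathsf A_j$). Let $\mathcal S_0$ be a set of states. If $\widetilde{\mathsf A}_1,\dots,\widetilde{\mathsf A}_n$ are $\mathcal S_0$-incompatible, then $\mathsf A_1,\dots,\mathsf A_n$ are $\mathcal S_0$-incompatible, and $$\chi_{incomp}(\widetilde{\mathsf A}_1,\dots,\widetilde{\mathsf A}_n)\ge\chi_{incomp}(\mathsf A_1,\dots,\mathsf A_n),\qquad\chi_{comp}(\widetilde{\mathsf A}_1,\dots,\widetilde{\mathsf A}_n)\ge\chi_{comp}(\mathsf A_1,\dots,\mathsf A_n).$$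
   Context: $\mathcal S$ denotes the set of density operators on a $d$-dimensional Hilbert space. An observable with finite outcome set $X$ is a POVM $x\mapsto\mathsf A(x)$. A stochastic matrix $\nu$ satisfies $\nu(x',x)\ge0$ and $\sum_{x'}\nu(x',x)=1$. Observables $\mathsf A_1,\dots,\mathsf A_n$ (outcome sets $X_1,\dots,X_n$) are compatible if there is an observable $\mathsf G$ on $X_1\times\dots\times X_n$ whose marginals ($\mathsf A_j(x_j)=\sum_{x_l,l\ne j}\mathsf G(x_1,\dots,x_n)$) are the $\mathsf A_j$; otherwise incompatible. For $\mathcal S_0\subset\mathcal S$, they are $\mathcal S_0$-compatible if there exist compatible observables $\mathsf A'_1,\dots,\mathsf A'_n$ (same outcome sets) with $\mathrm{Tr}[\varrho\mathsf A'_j(x)]=\mathrm{Tr}[\varrho\mathsf A_j(x)]$ for all $j,x$ and $\varrho\in\mathcal S_0$; otherwise $\mathcal S_0$-incompatible. For incompatible observables, $\chi_{incomp}=\min\{\dim\mathrm{aff}\mathcal S_0+1:\mathcal S_0\subset\mathcal S,\ \mathcal S_0\text{-incompatible}\}$ and $\chi_{comp}=\max\{\dim\mathrm{aff}\mathcal S_0+1:\mathcal S_0\subset\mathcal S,\ \mathcal S_0\text{-compatible}\}$. *)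

(* Defs.v *)
(* Hilbert space = C^d with C an arbitrary numClosedFieldType
   (e.g. the complex numbers R[i]); operators are 'M[C]_d. *)
From HB Require Import structures.
From mathcomp Require Import all_boot all_order all_algebra.
From Stdlib Require Import ClassicalEpsilon.

Set Implicit Arguments.
Unset Strict Implicit.
Unset Printing Implicit Defensive.

Import Order.TTheory GRing.Theory Num.Theory.
Local Open Scope ring_scope.

(* classical maximum / minimum of a set of naturals (meaningful when attained) *)
Definition nat_max (P : nat -> Prop) : nat :=
  epsilon (inhabits 0%N) (fun m => P m /\ forall k, P k -> (k <= m)%N).
Definition nat_min (P : nat -> Prop) : nat :=
  epsilon (inhabits 0%N) (fun m => P m /\ forall k, P k -> (m <= k)%N).

Section QuantumDefs.
Variable C : numClosedFieldType.
Variable d : nat.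

Definition psd (M : 'M[C]_d) : Prop :=
  forall v : 'cV[C]_d, 0 <= ((map_mx Num.conj v)^T *m M *m v) ord0 ord0.

Definition is_state (rho : 'M[C]_d) : Prop := psd rho /\ \tr rho = 1.

Definition is_observable (X : finType) (A : X -> 'M[C]_d) : Prop :=
  (forall x, psd (A x)) /\ \sum_(x : X) A x = 1%:M.

Definition joint_space (n : nat) (X : 'I_n -> finType) : finType :=
  {dffun forall j : 'I_n, X j}.

Definition compatible (n : nat) (X : 'I_n -> finType)
    (A : forall j : 'I_n, X j -> 'M[C]_d) : Prop :=
  exists G : joint_space X -> 'M[C]_d,
    is_observable G /\
    forall (j : 'I_n) (x : X j), A j x = \sum_(g : joint_space X | g j == x) G g.

Definition S0_compatible (n : nat) (X : 'I_n -> finType)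
    (S0 : 'M[C]_d -> Prop) (A : forall j : 'I_n, X j -> 'M[C]_d) : Prop :=
  exists A' : forall j : 'I_n, X j -> 'M[C]_d,
    compatible A' /\
    forall (j : 'I_n) (x : X j) (rho : 'M[C]_d),
      S0 rho -> \tr (rho *m A' j x) = \tr (rho *m A j x).

Definition S0_incompatible (n : nat) (X : 'I_n -> finType)
    (S0 : 'M[C]_d -> Prop) (A : forall j : 'I_n, X j -> 'M[C]_d) : Prop :=
  ~ S0_compatible S0 A.

Definition aff_indep (k : nat) (f : 'I_k -> 'M[C]_d) : Prop :=
  forall c : 'I_k -> C,
    (forall i, c i \is Num.real) ->
    \sum_(i < k) c i = 0 ->
    \sum_(i < k) c i *: f i = 0 ->
    forall i, c i = 0.

(* dim aff S0 + 1 = maximal number of affinely independent points of S0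
   (= 0 for S0 empty) *)
Definition affdim1 (S0 : 'M[C]_d -> Prop) : nat :=
  nat_max (fun k => exists f : 'I_k -> 'M[C]_d,
                      (forall i, S0 (f i)) /\ aff_indep f).

Definition chi_incomp (n : nat) (X : 'I_n -> finType)
    (A : forall j : 'I_n, X j -> 'M[C]_d) : nat :=
  nat_min (fun k => exists S0 : 'M[C]_d -> Prop,
     (forall rho, S0 rho -> is_state rho) /\ S0_incompatible S0 A /\ affdim1 S0 = k).

Definition chi_comp (n : nat) (X : 'I_n -> finType)
    (A : forall j : 'I_n, X j -> 'M[C]_d) : nat :=
  nat_max (fun k => exists S0 : 'M[C]_d -> Prop,
     (forall rho, S0 rho -> is_state rho) /\ S0_compatible S0 A /\ affdim1 S0 = k).

Definition stochastic (X Y : finType) (nu : Y -> X -> C) : Prop :=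
  (forall y x, 0 <= nu y x) /\ forall x, \sum_(y : Y) nu y x = 1.

Definition postproc (n : nat) (X Y : 'I_n -> finType)
    (nu : forall j : 'I_n, Y j -> X j -> C)
    (A : forall j : 'I_n, X j -> 'M[C]_d) : forall j : 'I_n, Y j -> 'M[C]_d :=
  fun j y => \sum_(x : X j) nu j y x *: A j x.

End QuantumDefs.

(* Main.v *)
Require Import Defs.
From HB Require Import structures.
From mathcomp Require Import all_boot all_order all_algebra.
From Stdlib Require Import Classical ClassicalEpsilon.
Import Order.TTheory GRing.Theory Num.Theory.
Local Open Scope ring_scope.

Lemma psd_sum (C : numClosedFieldType) (d : nat) (I : finType) (P : pred I)
  (M : I -> 'M[C]_d) : (forall i, P i -> psd (M i)) -> psd (\sum_(i | P i) M i).
Proof.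
move=> H v; rewrite mulmx_sumr mulmx_suml summxE.
by apply: sumr_ge0 => i Pi; apply: H.
Qed.

Lemma psd_scale (C : numClosedFieldType) (d : nat) (a : C) (M : 'M[C]_d) :
  0 <= a -> psd M -> psd (a *: M).
Proof.
move=> ha hM v; rewrite -scalemxAr -scalemxAl mxE.
exact: mulr_ge0.
Qed.

Lemma psd1 (C : numClosedFieldType) (d : nat) : psd (1%:M : 'M[C]_d).
Proof.
move=> v; rewrite mulmx1 mxE; apply: sumr_ge0 => i _.
by rewrite !mxE mulrC mul_conjC_ge0.
Qed.

Lemma psd0 (C : numClosedFieldType) (d : nat) : psd (0 : 'M[C]_d).
Proof. by move=> v; rewrite mulmx0 mul0mx mxE. Qed.
Lemma bigA_dep (R : comNzRingType) (I : finType) (T_ : I -> finType)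
  (Q : forall i, pred (T_ i)) (F : forall i, T_ i -> R) :
  \sum_(y : {dffun forall i, T_ i} | [forall i, Q i (y i)]) \prod_i F i (y i)
  = \prod_i \sum_(z | Q i z) F i z.
Proof.
pose P_ i := [ffun z => if Q i z then F i z else 0] : {ffun T_ i -> R}.
transitivity (\sum_(y : {dffun forall i, T_ i}) \prod_i P_ i (y i)).
  rewrite big_mkcond; apply: eq_bigr => y _.
  case: (boolP [forall i, Q i (y i)]) => [/forallP H | /forallPn [i Hi]].
    by apply: eq_bigr => i _; rewrite ffunE H.
  by rewrite (bigD1 i) //= ffunE (negbTE Hi) mul0r.
transitivity (\sum_(t : fprod T_) \prod_i P_ i (t i)).
  rewrite (reindex (@dffun_of_fprod I T_)) /=; last first.
    by apply/onW_bij/dffun_of_fprod_bij.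
  apply: eq_bigr => t _; apply: eq_bigr => i _; by rewrite /P_ !ffunE.
have E := @big_fprod R 0 1 *%R +%R I T_ P_.
rewrite [LHS](_ : _ = \big[+%R/0]_(t : fprod T_) \big[*%R/1]_(i in I) P_ i (t i)); last first.
  by apply: eq_bigr => t _; apply: eq_bigl.
rewrite E.
transitivity (\prod_i \sum_(t in tagged_with T_ i) untag 0 (P_ i) t).
  rewrite bigA_distr_big_dep; apply: eq_bigl => g.
  by apply/familyP/familyP => H i; move: (H i); rewrite !inE.
apply: eq_bigr => i _; rewrite -(big_tag (fun i (z : T_ i) => P_ i z)).
by rewrite [RHS]big_mkcond /=; apply: eq_bigr => z _; rewrite /P_ ffunE.
Qed.

Lemma compat_post (C : numClosedFieldType) (d n : nat) (X Y : 'I_n -> finType)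
  (nu : forall j : 'I_n, Y j -> X j -> C) (A : forall j : 'I_n, X j -> 'M[C]_d) :
  (forall j, stochastic (nu j)) -> compatible A -> compatible (postproc nu A).
Proof.
move=> Hnu [G [[Gpsd Gsum] GA]].
pose w (y : joint_space Y) (g : joint_space X) := \prod_j nu j (y j) (g j).
exists (fun y => \sum_g w y g *: G g); split; first split.
- move=> y; apply: psd_sum => g _; apply: psd_scale => //.
  by apply: prodr_ge0 => j _; case: (Hnu j).
- rewrite exchange_big /= -Gsum; apply: eq_bigr => g _.
  rewrite -scaler_suml.
  have -> : \sum_(y : joint_space Y) w y g = 1.
    transitivity (\sum_(y : joint_space Y | [forall i : 'I_n, true]) w y g).
      by apply: eq_bigl => y; apply/esym/forallP.
    transitivity (\prod_j \sum_(z | true) nu j z (g j)).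
      exact: (@bigA_dep C 'I_n Y (fun i _ => true) (fun i z => nu i z (g i))).
    apply: big1 => j _; by case: (Hnu j).
  by rewrite scale1r.
- move=> j y0; rewrite /postproc exchange_big /=.
  rewrite (partition_big (fun g : joint_space X => g j) predT) //=.
  apply: eq_bigr => x _; rewrite GA scaler_sumr; apply: eq_bigr => g /eqP gx.
  rewrite -scaler_suml; congr (_ *: _); symmetry.
  pose Q (k : 'I_n) (z : Y k) := (k != j) || (Tagged Y z == Tagged Y y0).
  transitivity (\sum_(y : joint_space Y | [forall k, Q k (y k)]) w y g).
    apply: eq_bigl => y; apply/eqP/forallP => [yj k|H]; rewrite /Q.
      by case: (k =P j) => //= kj; subst k; rewrite yj.
    by have := H j; rewrite /Q eqxx eq_Tagged /= => /eqP.
  transitivity (\prod_k \sum_(z | Q k z) nu k z (g k)).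
    exact: (@bigA_dep C 'I_n Y Q (fun i z => nu i z (g i))).
  rewrite (bigD1 j) //= [X in _ * X]big1 ?mulr1 => [|k kj].
    rewrite (eq_bigl (pred1 y0)) ?big_pred1_eq ?gx // => z.
    by rewrite /Q eqxx /= eq_Tagged.
  rewrite (eq_bigl predT) => [|z]; last by rewrite /Q kj.
  by case: (Hnu k).
Qed.

Lemma S0compat_post (C : numClosedFieldType) (d n : nat) (X Y : 'I_n -> finType)
  (nu : forall j : 'I_n, Y j -> X j -> C) (A : forall j : 'I_n, X j -> 'M[C]_d)
  (S0 : 'M[C]_d -> Prop) :
  (forall j, stochastic (nu j)) -> S0_compatible S0 A -> S0_compatible S0 (postproc nu A).
Proof.
move=> Hnu [A' [HA' Htr]]; exists (postproc nu A'); split.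
  exact: compat_post.
have trS (I : finType) (F : I -> 'M[C]_d) : \tr (\sum_i F i) = \sum_i \tr (F i).
  rewrite /mxtrace exchange_big; apply: eq_bigr => i _; by rewrite summxE.
move=> j y rho Hrho; rewrite /postproc !mulmx_sumr !trS.
have trZ (a : C) (M : 'M[C]_d) : \tr (a *: M) = a * \tr M.
  by rewrite /mxtrace mulr_sumr; apply: eq_bigr => i _; rewrite mxE.
apply: eq_bigr => x _; rewrite -!scalemxAr !trZ Htr //.
Qed.

Lemma nat_min_spec (P : nat -> Prop) k : P k ->
  P (nat_min P) /\ forall k, P k -> (nat_min P <= k)%N.
Proof.
move=> Pk; rewrite /nat_min.
apply: (epsilon_spec (inhabits 0%N) (fun m => P m /\ forall k, P k -> (m <= k)%N)).
elim/ltn_ind: k Pk => m IH Pm.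
case: (classic (exists k, (k < m)%N /\ P k)) => [[k [km Pk]]|H].
  exact: IH km Pk.
exists m; split => // k Pk; rewrite leqNgt; apply/negP => km.
by apply: H; exists k.
Qed.

Lemma nat_max_spec (P : nat -> Prop) k N : P k -> (forall k, P k -> (k <= N)%N) ->
  P (nat_max P) /\ forall k, P k -> (k <= nat_max P)%N.
Proof.
move=> Pk HN; rewrite /nat_max.
apply: (epsilon_spec (inhabits 0%N) (fun m => P m /\ forall k, P k -> (k <= m)%N)).
elim: N HN => [|N IH] HN.
  exists 0%N; split => [|j /HN]; last by rewrite leqn0 => /eqP ->.
  by have := HN k Pk; rewrite leqn0 => /eqP <-.
case: (classic (P N.+1)) => [PN|nPN]; first by exists N.+1.
apply: IH => j Pj; have := HN j Pj; rewrite leq_eqVlt => /orP[/eqP Ej|//].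
by rewrite Ej in Pj.
Qed.
Definition gfun (C : numClosedFieldType) (d k : nat) (f : 'I_k -> 'M[C]_d) (i : 'I_k)
  (t : option (bool * 'I_d * 'I_d)) : C :=
  match t with
  | None => 1
  | Some (b, a, c) => if b then 'Re (f i a c) else 'Im (f i a c)
  end.

Arguments gfun {C d k}.

Lemma gfun_real (C : numClosedFieldType) (d k : nat) (f : 'I_k -> 'M[C]_d) i t :
  gfun f i t \is Num.real.
Proof.
case: t => [[[[] a] c]|] /=; by rewrite ?Creal_Re ?Creal_Im ?real1.
Qed.

Lemma aff_real_ker (C : numClosedFieldType) (d k : nat) (f : 'I_k -> 'M[C]_d) :
  aff_indep f -> forall c : 'I_k -> C, (forall i, c i \is Num.real) ->
  (forall t, \sum_i c i * gfun f i t = 0) -> forall i, c i = 0.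
Proof.
move=> Hf c cR Hc; apply: Hf => //.
  transitivity (\sum_i c i * gfun f i None); last exact: Hc.
  by apply: eq_bigr => i _; rewrite /= mulr1.
apply/matrixP => a b; rewrite summxE mxE.
transitivity (\sum_i c i * gfun f i (Some (true, a, b)) +
              'i * \sum_i c i * gfun f i (Some (false, a, b))).
  rewrite mulr_sumr -big_split /=; apply: eq_bigr => i _.
  by rewrite mxE {1}[f i a b]Crect mulrDr mulrCA.
by rewrite !Hc mulr0 addr0.
Qed.

Lemma aff_bound (C : numClosedFieldType) (d k : nat) (f : 'I_k -> 'M[C]_d) :
  aff_indep f -> (k <= #|{: option (bool * 'I_d * 'I_d)}|)%N.
Proof.
move=> Hf.
rewrite leqNgt; apply/negP => Hk.
pose W : 'M[C]_(k, #|{: option (bool * 'I_d * 'I_d)}|) :=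
  \matrix_(i, j) gfun f i (enum_val j).
have : ~~ row_free W.
  apply/negP => /eqP E; have := rank_leq_col W; rewrite E leqNgt Hk.
  by [].
rewrite -kermx_eq0 => /matrix0Pn [i0 [j0 Hne]].
pose v := row i0 (kermx W).
have vW : v *m W = 0 by rewrite /v -row_mul mulmx_ker row0.
have Hc (t : option (bool * 'I_d * 'I_d)) : \sum_i v 0 i * gfun f i t = 0.
  have := congr1 (fun M : 'rV[C]_(#|{: option (bool * 'I_d * 'I_d)}|) => M 0 (enum_rank t)) vW.
  rewrite !mxE => E; apply: etrans _ E.
  by apply: eq_bigr => i _; rewrite !mxE enum_rankK.
have HRe := @aff_real_ker C d k f Hf (fun i => 'Re (v 0 i)) (fun i => Creal_Re _).
have HIm := @aff_real_ker C d k f Hf (fun i => 'Im (v 0 i)) (fun i => Creal_Im _).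
have : v 0 j0 = 0.
  rewrite [v 0 j0]Crect HRe ?HIm ?mulr0 ?addr0 // => t.
  - transitivity ('Im (\sum_i v 0 i * gfun f i t)); last by rewrite Hc raddf0.
    rewrite raddf_sum /=; apply: eq_bigr => i _.
    by rewrite ImMr // gfun_real.
  - transitivity ('Re (\sum_i v 0 i * gfun f i t)); last by rewrite Hc raddf0.
    rewrite raddf_sum /=; apply: eq_bigr => i _.
    by rewrite ReMr // gfun_real.
by rewrite /v mxE => /eqP; rewrite (negbTE Hne).
Qed.

Lemma affdim_bound (C : numClosedFieldType) (d : nat) (S0 : 'M[C]_d -> Prop) :
  (affdim1 S0 <= #|{: option (bool * 'I_d * 'I_d)}|)%N.
Proof.
have W0 : exists f : 'I_0 -> 'M[C]_d, (forall i, S0 (f i)) /\ aff_indep f.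
  by exists (fun _ => 0); split => [[m Hm]|c _ _ _ [m Hm]].
have [H _] := @nat_max_spec (fun k => exists f : 'I_k -> 'M[C]_d,
                      (forall i, S0 (f i)) /\ aff_indep f) 0%N
   #|{: option (bool * 'I_d * 'I_d)}| W0
   (fun k => fun '(ex_intro f (conj _ Hf)) => @aff_bound C d k f Hf).
by case: H => f [_ Hf]; exact: (@aff_bound C d _ f Hf).
Qed.

Lemma exists_compat (C : numClosedFieldType) (d n : nat) (X : 'I_n -> finType)
  (A : forall j : 'I_n, X j -> 'M[C]_d) :
  (forall j, is_observable (A j)) ->
  exists A' : forall j : 'I_n, X j -> 'M[C]_d, compatible A'.
Proof.
move=> HA.
case: (classic (exists j, #|X j| = 0%N)) => [[j0 Hj0]|Hne].
  have E : (1%:M : 'M[C]_d) = 0.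
    case: (HA j0) => _ <-; apply: big_pred0 => x; exact: (card0_eq Hj0).
  exists (fun j x => \sum_(g : joint_space X | g j == x) (0 : 'M[C]_d)).
  exists (fun _ => 0); split => //; split; first by move=> g; exact: psd0.
  by rewrite big1 // E.
have Hpos j : (0 < #|X j|)%N.
  by rewrite lt0n; apply/eqP => E; apply: Hne; exists j.
pose g0 : joint_space X := [ffun j => enum_val (Ordinal (Hpos j))].
pose G (g : joint_space X) : 'M[C]_d := if g == g0 then 1%:M else 0.
exists (fun j x => \sum_(g : joint_space X | g j == x) G g).
exists G; split => //; split.
  by move=> g; rewrite /G; case: eqP => _; [exact: psd1 | exact: psd0].
rewrite (bigD1 g0) //= big1 ?addr0 /G ?eqxx // => g /negbTE ->.
by [].
Qed.

Theorem proposition4p2 (C : numClosedFieldType) (d n : nat)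
    (X Y : 'I_n -> finType)
    (A : forall j : 'I_n, X j -> 'M[C]_d)
    (nu : forall j : 'I_n, Y j -> X j -> C)
    (S0 : 'M[C]_d -> Prop) :
  (forall j, is_observable (A j)) ->
  (forall j, stochastic (nu j)) ->
  (forall rho, S0 rho -> is_state rho) ->
  S0_incompatible S0 (postproc nu A) ->
  [/\ S0_incompatible S0 A,
      (chi_incomp A <= chi_incomp (postproc nu A))%N &
      (chi_comp A <= chi_comp (postproc nu A))%N].
Proof.
move=> HA Hnu Hst Hinc.
have incP (S : 'M[C]_d -> Prop) : S0_incompatible S (postproc nu A) -> S0_incompatible S A.
  by move=> H Hc; apply: H; exact: (@S0compat_post C d n X Y nu A S Hnu Hc).
split; first exact: incP.
- rewrite /chi_incomp.
  pose PI (B : forall j : 'I_n, _ -> 'M[C]_d) := fun k => exists S : 'M[C]_d -> Prop,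
     (forall rho, S rho -> is_state rho) /\ S0_incompatible S B /\ affdim1 S = k.
  have [[S1 [st1 [inc1 e1]]] _] := @nat_min_spec (PI Y (postproc nu A)) _
     (ex_intro _ S0 (conj Hst (conj Hinc erefl))).
  have [_ H] := @nat_min_spec (PI X A) _ (ex_intro _ S1 (conj st1 (conj (incP _ inc1) e1))).
  exact: H (ex_intro _ S1 (conj st1 (conj (incP _ inc1) e1))).
- rewrite /chi_comp.
  have [A' HA'] := @exists_compat C d n X A HA.
  have Hc0 : S0_compatible (fun _ : 'M[C]_d => False) A.
    by exists A'; split.
  have bnd (B : forall j : 'I_n, _ -> 'M[C]_d) k :
      (exists S, (forall rho, S rho -> is_state rho) /\ S0_compatible S B /\ affdim1 S = k) ->
      (k <= #|{: option (bool * 'I_d * 'I_d)}|)%N.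
    by case=> S [_ [_ <-]]; exact: affdim_bound.
  pose PC (B : forall j : 'I_n, _ -> 'M[C]_d) := fun k => exists S : 'M[C]_d -> Prop,
     (forall rho, S rho -> is_state rho) /\ S0_compatible S B /\ affdim1 S = k.
  have [[S1 [st1 [c1 e1]]] _] := @nat_max_spec (PC X A) _ _
     (ex_intro _ (fun _ : 'M[C]_d => False) (conj (fun _ (f : False) => match f with end) (conj Hc0 erefl)))
     (@bnd X A).
  have W : exists S, (forall rho, S rho -> is_state rho) /\
      S0_compatible S (postproc nu A) /\ affdim1 S = nat_max (fun k => exists S0 : 'M[C]_d -> Prop,
     (forall rho, S0 rho -> is_state rho) /\ S0_compatible S0 A /\ affdim1 S0 = k).
    exists S1; split => //; split => //; exact: (@S0compat_post C d n X Y nu A S1 Hnu c1).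
  have [_ H] := @nat_max_spec (PC Y (postproc nu A)) _ _ W (@bnd Y (postproc nu A)).
  exact: H W.
Qed.
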